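(* Let $M,N:\Sigma\to c(X)$ be multimeasures with $M\ll N$, and assume that $N$ satisfies the countable chain condition. Then for every $A\in\Sigma\setminus\mathcal N(M)$ there exists $B\in\Sigma\setminus\mathcal N(M)$ with $B\subseteq A$ such that $N\ll M$ on $\Sigma_B$, i.e. every $E\in\Sigma_B$ with $M(E)=\{0\}$ satisfies $N(E)=\{0\}$.
   Context: $(\Omega,\Sigma)$ is a measurable space and $X$ is a Hausdorff locally convex space with dual $X'$. $c(X)$ is the family of nonempty closed convex subsets of $X$; $s(x',C)=\sup\{\langle x',x\rangle:x\in C\}$. A multimeasure is a map $M:\Sigma\to c(X)$ such that for every $x'\in X'$ the set function $E\mapsto s(x',M(E))$ is a $\sigma$-finite countably additive measure with values in $(-\infty,+\infty]$. $\mathcal N(M)=\{E\in\Sigma:M(E)=\{0\}\}$. $M\ll N$ means $\mathcal N(N)\subseteq\mathcal N(M)$. $\Sigma_B=\{E\in\Sigma:E\subseteq B\}$. A multimeasure $N$ satisfies the countable chain condition (ccc) if every family of pairwise disjoint sets in $\Sigma\setminus\mathcal N(N)$ is at most countable. *)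

(* Defs.v *)
From HB Require Import structures.
From mathcomp Require Import all_boot all_order all_algebra.
From mathcomp Require Import all_classical all_reals all_analysis.
Set Implicit Arguments. Unset Strict Implicit. Unset Printing Implicit Defensive.
Import Order.TTheory GRing.Theory Num.Theory.
Import numFieldTopology.Exports numFieldNormedType.Exports.
Local Open Scope classical_set_scope.
Local Open Scope ring_scope.

Section multimeasure_defs.
Context {R : realType} {X : tvsType R}.

Definition dual_elt (f : X -> R) : Prop :=
  (forall (a : R) (x y : X), f (a *: x + y) = a * f x + f y) /\ continuous f.

Definition cX (C : set X) : Prop :=
  C !=set0 /\ closed C /\ @convex_set R X C.

Definition supp_fun (f : X -> R) (C : set X) : \bar R :=
  ereal_sup [set (f x)%:E | x in C].

Context {d : measure_display} {T : measurableType d}.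

Definition multimeasure (M : set T -> set X) : Prop :=
  (forall E, measurable E -> cX (M E)) /\
  forall f, dual_elt f ->
    let mu := fun E => supp_fun f (M E) in
    [/\ mu set0 = 0%E,
        (forall E, measurable E -> mu E != -oo%E),
        semi_sigma_additive mu &
        sigma_finite setT mu].

Definition null_sets (M : set T -> set X) : set (set T) :=
  [set E | measurable E /\ M E = [set 0]].

Definition mabs_cont (M N : set T -> set X) : Prop :=
  null_sets N `<=` null_sets M.

Definition ccc (N : set T -> set X) : Prop :=
  forall F : set (set T),
    (forall A, F A -> measurable A /\ ~ null_sets N A) ->
    (forall A B, F A -> F B -> A <> B -> A `&` B = set0) ->
    countable F.
End multimeasure_defs.

(* Main.v *)
Require Import Defs.
From HB Require Import structures.
From mathcomp Require Import all_boot all_order all_algebra.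
From mathcomp Require Import all_classical all_reals all_analysis.
From mathcomp Require Import ring lra.
Set Implicit Arguments. Unset Strict Implicit. Unset Printing Implicit Defensive.
Import Order.TTheory GRing.Theory Num.Theory.
Import numFieldTopology.Exports numFieldNormedType.Exports.
Local Open Scope classical_set_scope.
Local Open Scope ring_scope.
Section HBsec.
Context {R : realType} {X : tvsType R}.

Lemma convU (U : set X) : @convex_set R X U -> forall x y (l : R), U x -> U y -> 0 <= l -> l <= 1 -> U (l *: x + (1 - l) *: y).
Proof. move=> cU x y l Ux Uy l0 l1. have := cU x y (Itv01 l0 l1) (mem_set Ux) (mem_set Uy). by rewrite inE. Qed.

Variables (U : set X) (x0 : X).
Hypotheses (cU : @convex_set R X U) (U0 : U 0) (nUx0 : ~ U x0).
Hypothesis absorb : forall y : X, exists t : R, [/\ 0 < t, U (t *: y) & U (- (t *: y))].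

Definition goodG (G : set (X * R)) :=
 [/\ G (x0, 1),
   (forall z r s, G (z,r) -> G (z,s) -> r = s),
   (forall a z r w s, G (z,r) -> G (w,s) -> G (a *: z + w, a * r + s)) &
   (forall z r, G (z,r) -> U z -> r <= 1)].

Lemma goodG00 G : goodG G -> G (0, 0).
Proof.
case=> Gx _ Gl _; have := Gl (-1) _ _ _ _ Gx Gx.
by rewrite scaleN1r addNr mulN1r addNr.
Qed.

Lemma goodG_lin2 G a b z r w s : goodG G -> G (z,r) -> G (w,s) ->
  G (a *: z + b *: w, a * r + b * s).
Proof.
move=> gG Gz Gw; have [_ _ Gl _] := gG.
have := Gl b _ _ _ _ Gw (goodG00 gG); rewrite !addr0 => Gbw.
exact: Gl.
Qed.

Lemma x0_neq0 : x0 != 0.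
Proof. by apply/eqP => e; apply: nUx0; rewrite e. Qed.

Definition G0 : set (X * R) := [set p | exists t, p = (t *: x0, t)].

Lemma goodG0 : goodG G0.
Proof.
split.
- by exists 1; rewrite scale1r.
- move=> z r s [t [-> ->]] [t' [e ->]].
  apply/eqP; rewrite -subr_eq0; apply/eqP.
  have : (t - t') *: x0 == 0 by rewrite scalerBl e subrr.
  by rewrite scaler_eq0 (negbTE x0_neq0) orbF => /eqP.
- move=> a z r w s [t [-> ->]] [t' [-> ->]].
  by exists (a * t + t'); rewrite scalerDl scalerA.
- move=> z r [t [-> ->]] Ut; rewrite leNgt; apply/negP => t1.
  apply: nUx0.
  have t0 : 0 < t by apply: lt_trans t1.
  have := convU cU (l:=t^-1) Ut U0; rewrite scaler0 addr0 scalerA mulVf ?gt_eqF// scale1r.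
  apply; first by rewrite invr_ge0 ltW.
  by rewrite invf_le1 // ltW.
Qed.

Section ext.
Variables (A : set (X * R)) (y : X).
Hypotheses (gA : goodG A) (ny : ~ exists r, A (y, r)).

Lemma key_ineq d1 r1 t1 d2 r2 t2 : A (d1, r1) -> 0 < t1 -> U (d1 + t1 *: y) ->
  A (d2, r2) -> 0 < t2 -> U (d2 - t2 *: y) -> (r2 - 1) / t2 <= (1 - r1) / t1.
Proof.
move=> A1 t10 U1 A2 t20 U2.
have s0 : 0 < t1 + t2 by rewrite addr_gt0.
pose l := t1 / (t1 + t2).
have l0 : 0 <= l by rewrite divr_ge0 // ltW.
have l1 : l <= 1 by rewrite ler_pdivrMr // mul1r lerDl ltW.
have El : (1 - l) * t1 = l * t2.
  rewrite /l; field; by rewrite gt_eqF.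
have := convU cU U2 U1 l0 l1.
rewrite scalerBr scalerDr !scalerA El addrACA addNr addr0 => Uv.
have := goodG_lin2 l (1 - l) gA A2 A1.
have [_ _ _ Gb] := gA => /Gb /(_ Uv) H.
rewrite ler_pdivrMr // mulrAC ler_pdivlMr //.
move: H; rewrite /l => H.
have H2 : t1 * r2 + t2 * r1 <= t1 + t2.
  have : (t1 / (t1 + t2) * r2 + (1 - t1 / (t1 + t2)) * r1) * (t1 + t2) <= 1 * (t1 + t2).
    by rewrite ler_pM2r.
  have -> : (t1 / (t1 + t2) * r2 + (1 - t1 / (t1 + t2)) * r1) * (t1 + t2) = t1 * r2 + t2 * r1.
    by field; rewrite gt_eqF.
  by rewrite mul1r.
nra.
Qed.
Definition Ls : set R := [set l | exists d r t, [/\ A (d, r), 0 < t, U (d - t *: y) & l = (r - 1) / t]].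
Definition Hs : set R := [set h | exists d r t, [/\ A (d, r), 0 < t, U (d + t *: y) & h = (1 - r) / t]].

Lemma exists_c : exists c, (forall l, Ls l -> l <= c) /\ (forall h, Hs h -> c <= h).
Proof.
have [t [t0 Uty Umty]] := absorb y.
have A00 := goodG00 gA.
have Lne : Ls !=set0 by exists ((0 - 1) / t), 0, 0, t; split => //; rewrite sub0r.
have Hne : Hs (((1 - 0) / t)) by exists 0, 0, t; split => //; rewrite add0r.
have LH : forall l h, Ls l -> Hs h -> l <= h.
  move=> l h [d2 [r2 [t2 [A2 t20 U2 ->]]]] [d1 [r1 [t1 [A1 t10 U1 ->]]]].
  exact: (key_ineq A1 t10 U1 A2 t20 U2).
exists (sup Ls); split.
  move=> l Ll; apply: ub_le_sup => //; exists ((1 - 0) / t) => l' Ll'; exact: LH.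
move=> h Hh; apply: ge_sup => // l' Ll'; exact: LH.
Qed.

Variable c : R.
Hypotheses (cL : forall l, Ls l -> l <= c) (cH : forall h, Hs h -> c <= h).

Definition Bext : set (X * R) :=
  [set p | exists d r t, A (d, r) /\ p = (d + t *: y, r + t * c)].

Lemma goodBext : goodG Bext.
Proof.
have [Ax Af Al Ab] := gA.
split.
- by exists x0, 1, 0; split => //; rewrite scale0r addr0 mul0r addr0.
- move=> z r s [d [r' [t [Ad [-> ->]]]]] [d' [s' [t' [Ad' [e ->]]]]].
  have [tt|tt] := eqVneq t t'.
    subst t'; move/addIr: e => e; subst d'.
    by rewrite (Af _ _ _ Ad Ad').
  exfalso; apply: ny.
  have e2 : (t - t') *: y = d' - d.
    rewrite scalerBl.
    have -> : t *: y = d' + t' *: y - d by rewrite -e addrAC subrr add0r.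
    by rewrite addrAC addrK.
  exists ((t - t')^-1 * s' + (- (t - t')^-1) * r').
  have := goodG_lin2 ((t - t')^-1) (- (t - t')^-1) gA Ad' Ad.
  rewrite scaleNr -scalerBr -e2 scalerA mulVf ?scale1r //.
  by rewrite subr_eq0.
- move=> a z r w s [d [r' [t [Ad [-> ->]]]]] [d' [s' [t' [Ad' [-> ->]]]]].
  exists (a *: d + d'), (a * r' + s'), (a * t + t'); split; first exact: Al.
  congr (_, _); last by ring.
  by rewrite scalerDr scalerA scalerDl addrACA.
- move=> z r [d [r' [t [Ad [-> ->]]]]] Uz.
  have [t0|t0|t0] := ltgtP t 0.
  + have : Ls ((r' - 1) / (- t)).
      exists d, r', (- t); split => //; first by rewrite oppr_gt0.
      by rewrite scaleNr opprK.
    move/cL; rewrite ler_pdivrMr ?oppr_gt0 // => h; nra.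
  + have : Hs ((1 - r') / t) by exists d, r', t.
    move/cH; rewrite ler_pdivlMr // => h; nra.
  + by subst t; rewrite mul0r addr0; apply: Ab Ad _; rewrite scale0r addr0 in Uz.
Qed.

Lemma Bext_proper : A `<` Bext.
Proof.
split.
  by move=> [z r] Az; exists z, r, 0; split => //; rewrite scale0r addr0 mul0r addr0.
move=> sB; apply: ny; exists c; apply: sB.
exists 0, 0, 1; split; first exact: goodG00 gA.
by rewrite add0r scale1r add0r mul1r.
Qed.
End ext.
Lemma exists_total_good : exists A, goodG A /\ forall z, exists r, A (z, r).
Proof.
pose P := fun G : set (X * R) => G = set0 \/ goodG G.
have chainP : forall F : set (set (X * R)), F `<=` P -> total_on F subset -> P (\bigcup_(G in F) G).
  move=> F FP Ftot.
  have gF : forall G p, F G -> G p -> goodG G.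
    move=> G p FG Gp; case: (FP G FG) => // G0e; by rewrite G0e in Gp.
  have [Fne|Fe] := pselect (exists G, F G /\ exists p, G p); last first.
    left; apply/seteqP; split => // p [G FG Gp]; apply: Fe; exists G; split => //; by exists p.
  right; have [G1 [FG1 [p1 G1p]]] := Fne; have [G1x _ _ _] := gF _ _ FG1 G1p.
  split.
  - by exists G1.
  - move=> z r s [Ga Fa Ar] [Gb Fb Bs].
    have [ab|ba] := Ftot _ _ Fa Fb.
      have [_ Gf _ _] := gF _ _ Fb Bs; exact: Gf (ab _ Ar) Bs.
    have [_ Gf _ _] := gF _ _ Fa Ar; exact: Gf Ar (ba _ Bs).
  - move=> a z r w s [Ga Fa Ar] [Gb Fb Bs].
    have [ab|ba] := Ftot _ _ Fa Fb.
      have [_ _ Gl _] := gF _ _ Fb Bs; exists Gb => //; exact: Gl (ab _ Ar) Bs.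
    have [_ _ Gl _] := gF _ _ Fa Ar; exists Ga => //; exact: Gl Ar (ba _ Bs).
  - move=> z r [Ga Fa Ar] Uz; have [_ _ _ Gb] := gF _ _ Fa Ar; exact: Gb Ar Uz.
have [A [PA Amax]] := Zorn_bigcup chainP.
have gA : goodG A.
  case: PA => // A0; exfalso; apply: (Amax G0); last by right; exact: goodG0.
  rewrite A0; split => // sub; have := sub (x0, 1); apply; by exists 1; rewrite scale1r.
exists A; split => // z; apply: contrapT => nz.
have [c [cL cH]] := exists_c z gA.
by apply: (Amax _ (Bext_proper gA nz c)); right; exact: goodBext gA nz c cL cH.
Qed.
End HBsec.
Section Sep.
Context {R : realType} {X : tvsType R}.

Lemma absorb_nbhs (U : set X) : nbhs (0 : X) U ->
  forall y : X, exists t : R, [/\ 0 < t, U (t *: y) & U (- (t *: y))].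
Proof.
move=> U0 y.
have /= := scale_continuous ((0 : R^o), y) U.
rewrite scale0r => /(_ U0)[] /= B [B1 B2] BU.
have /nbhs_ballP [e /= e0 He] := B1.
exists (e / 2); split; first by rewrite divr_gt0.
  apply: (BU (e / 2, y)); split => //; last exact: nbhs_singleton.
  apply: He; rewrite /ball /= sub0r normrN ger0_norm ?divr_ge0 ?ltW //.
  by rewrite ltr_pdivrMr // ltr_pMr // ltr1n.
rewrite -scaleNr; apply: (BU (- (e / 2), y)); split => //; last exact: nbhs_singleton.
apply: He; rewrite /ball /= sub0r opprK ger0_norm ?divr_ge0 ?ltW //.
by rewrite ltr_pdivrMr // ltr_pMr // ltr1n.
Qed.
Lemma sep_point (hX : hausdorff_space X) (x : X) : x != 0 ->
  exists f : X -> R, [/\ (forall (a : R) (u v : X), f (a *: u + v) = a * f u + f v),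
     continuous f & f x = 1].
Proof.
move=> x0.
have [A0 [B [A0n Bn AB]]] : exists A0 B, [/\ nbhs (0 : X) A0, nbhs x B & A0 `&` B = set0].
  apply: contrapT => H; move/eqP: x0; apply; symmetry; apply: hX => A0 B hA hB.
  apply: contrapT => ne; apply: H; exists A0, B; split => //.
  by apply/seteqP; split => // p Hp; apply: ne; exists p.
have [Bs Bconv [Bopen Bnb]] := @locally_convex R X.
have [b [Bsb b0] bA] := Bnb 0 A0 A0n.
have cb : @convex_set R X b by apply: Bconv; rewrite inE.
have bn : nbhs (0 : X) b by apply: open_nbhs_nbhs; split => //; exact: Bopen.
have nbx : ~ b x.
  move=> bx; have : (A0 `&` B) x by split; [exact: bA | exact: nbhs_singleton].
  by rewrite AB.
have [A [[Ax Af Al Ab] Atot]] := exists_total_good cb b0 nbx (absorb_nbhs bn).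
pose f z := xget 0 [set r | A (z, r)].
have Afz z : A (z, f z) by exact: (xgetPex 0 (Atot z)).
have flin a u v : f (a *: u + v) = a * f u + f v.
  by apply: (Af (a *: u + v)); [exact: Afz | exact: Al].
have f0 : f 0 = 0.
  have := flin 1 0 0; rewrite scale1r addr0 mul1r.
  by move=> /(congr1 (fun t => t - f 0)) /=; rewrite subrr addrK => e; rewrite -e.
have fN u : f (- u) = - f u.
  have := flin (-1) u 0; rewrite scaleN1r addr0 f0 addr0 mulN1r //.
have fb u : b u -> f u <= 1 by move=> bu; exact: Ab (Afz u) bu.
exists f; split => //; last by apply: Af (Afz x) Ax.
pose V := b `&` (-%R @` b).
have Vn : nbhs (0 : X) V by apply: filterI => //; exact: nbhs0N.
have fV v : V v -> `|f v| <= 1.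
  move=> [bv [u bu uv]]; rewrite ler_norml fb // andbT.
  by rewrite -uv fN lerN2 fb.
move=> z; apply/cvgrPdist_lt => e e0.
have k0 : e / 2 != 0 by rewrite gt_eqF // divr_gt0.
have := nbhsT z (nbhs0Z k0 Vn).
apply: filterS => w [_ [v Vv <-] <-].
rewrite [z + _]addrC flin opprD addrCA subrr addr0 normrN normrM.
rewrite ger0_norm ?divr_ge0 ?ltW //.
have := fV v Vv => h.
apply: (le_lt_trans (ler_wpM2l _ h)); first by rewrite divr_ge0 ?ltW.
by rewrite mulr1 ltr_pdivrMr // ltr_pMr // ltr1n.
Qed.
End Sep.
Section MeasPart.
Context {R : realType} {X : tvsType R} {d : measure_display} {T : measurableType d}.

Lemma supp_fun0 (f : X -> R) : dual_elt f -> supp_fun f [set 0] = 0%E.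
Proof.
move=> [fl _]; rewrite /supp_fun image_set1 ereal_sup1.
have := fl 1 0 0; rewrite scale1r addr0 mul1r.
by move=> /(congr1 (fun t => t - f 0)) /=; rewrite subrr addrK => e; rewrite -e.
Qed.

Lemma null_of_supp (hX : hausdorff_space X) (C : set X) : cX C ->
  (forall f, dual_elt f -> supp_fun f C = 0%E) -> C = [set 0].
Proof.
move=> [[p Cp] _] H.
have C0 : forall q, C q -> q = 0.
  move=> q Cq; apply/eqP; apply: contrapT => /negP q0.
  have [f [fl fc fq]] := sep_point hX q0.
  have := H f (conj fl fc); rewrite /supp_fun => e.
  have : ((f q)%:E <= ereal_sup [set (f x)%:E | x in C])%E.
    by apply: ereal_sup_ubound; exists q.
  by rewrite e fq lee_fin ler10.
apply/seteqP; split => [q /C0 -> //|q ->]; by rewrite -(C0 p Cp).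
Qed.

Lemma mm_set0 (hX : hausdorff_space X) (M : set T -> set X) : multimeasure M -> M set0 = [set 0].
Proof.
move=> [Mc Mf]; apply: null_of_supp => //; first exact: Mc.
by move=> f df; have [] := Mf f df.
Qed.

Lemma mm_bigcup (hX : hausdorff_space X) (M : set T -> set X) (G : nat -> set T) :
  multimeasure M -> (forall n, measurable (G n)) -> (forall n, M (G n) = [set 0]) ->
  trivIset setT G -> M (\bigcup_n G n) = [set 0].
Proof.
move=> [Mc Mf] mG MG tG.
have mU : measurable (\bigcup_n G n) by exact: bigcupT_measurable.
apply: null_of_supp => //; first exact: Mc.
move=> f df; have [_ _ sa _] := Mf f df.
have := sa G mG tG mU.
have -> : (fun n => \sum_(0 <= i < n) supp_fun f (M (G i)))%E = fun _ => 0%E.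
  by apply/funext => n; rewrite big1 // => i _; rewrite MG supp_fun0.
move=> h; symmetry; apply: (cvg_unique (@ereal_hausdorff R) _ h); exact: cvg_cst.
Qed.
End MeasPart.

Theorem lemma3p2 (R : realType) (X : tvsType R) (d : measure_display)
    (T : measurableType d) (M N : set T -> set X) :
  hausdorff_space X ->
  multimeasure M -> multimeasure N ->
  mabs_cont M N -> ccc N ->
  forall A : set T, measurable A -> ~ null_sets M A ->
  exists B : set T, [/\ measurable B, ~ null_sets M B, B `<=` A &
    forall E : set T, measurable E -> E `<=` B ->
      M E = [set 0%R] -> N E = [set 0%R]].
Proof.
move=> hX Mm Nm _ cN A mA nMA.
pose bad E := [/\ measurable E, E `<=` A, M E = [set 0] & ~ null_sets N E].
pose P := fun F : set (set T) => F `<=` bad /\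
  (forall E1 E2, F E1 -> F E2 -> E1 <> E2 -> E1 `&` E2 = set0).
have chainP : forall FF : set (set (set T)), FF `<=` P -> total_on FF subset ->
    P (\bigcup_(F in FF) F).
  move=> FF FFP FFt; split.
    by move=> E [F FFF FE]; exact: (FFP F FFF).1.
  move=> E1 E2 [F1 FF1 F1E] [F2 FF2 F2E] ne.
  have [s12|s21] := FFt _ _ FF1 FF2.
    exact: (FFP F2 FF2).2 (s12 _ F1E) F2E ne.
  exact: (FFP F1 FF1).2 F1E (s21 _ F2E) ne.
have [Fam [[Fbad Fdis] Fmax]] := Zorn_bigcup chainP.
have cF : countable Fam.
  apply: cN => [E /Fbad [mE _ _ nE]//|E1 E2 F1 F2 ne]; exact: Fdis.
have /countable_injP [g ginj] := cF.
pose S n : set T := match pselect (exists E, Fam E /\ g E = n) with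
  | left h => proj1_sig (cid h) | right _ => set0 end.
have SP n : (S n = set0) \/ (Fam (S n) /\ g (S n) = n).
  rewrite /S; case: pselect => [h|_]; last by left.
  by right; exact: (proj2_sig (cid h)).
have Sg E : Fam E -> S (g E) = E.
  move=> FE; rewrite /S; case: pselect => [h|]; last by case; exists E.
  case: (proj2_sig (cid h)) => FS gS; exact: ginj (mem_set FS) (mem_set FE) gS.
have Sb n : S n = set0 \/ bad (S n).
  by case: (SP n) => [->|[FS _]]; [left | right; exact: Fbad].
have mS n : measurable (S n) by case: (Sb n) => [->|[]].
have MS n : M (S n) = [set 0] by case: (Sb n) => [->|[]//]; exact: mm_set0.
have SA n : S n `<=` A by case: (Sb n) => [-> //|[]].
have Sdis n m : n <> m -> S n `&` S m = set0.
  move=> nm; case: (SP n) => [->|[FSn gSn]]; first by rewrite set0I.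
  case: (SP m) => [->|[FSm gSm]]; first by rewrite setI0.
  apply: (Fdis _ _ FSn FSm) => e; apply: nm; by rewrite -gSn -gSm e.
pose E0 := \bigcup_n S n.
pose Bs := A `\` E0.
have mE0 : measurable E0 by exact: bigcupT_measurable.
have mBs : measurable Bs by exact: measurableD.
pose G n := if n is k.+1 then S k else Bs.
have mG n : measurable (G n) by case: n.
have tG : trivIset setT G.
  move=> [|i] [|j] _ _ [p [Gi Gj]] //=.
  - by case: Gi => _ nE; exfalso; apply: nE; exists j.
  - by case: Gj => _ nE; exfalso; apply: nE; exists i.
  - congr _.+1; apply: contrapT => ij.
    have := Sdis i j ij; rewrite -[_ `&` _]/(S i `&` S j) => e.
    by have : (S i `&` S j) p by []; rewrite e.
have GA : \bigcup_n G n = A.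
  apply/seteqP; split.
    by move=> p [[|i] _ /=]; [case | exact: SA].
  move=> p Ap; have [E0p|nE0p] := pselect (E0 p).
    by case: E0p => i _ Sip; exists i.+1.
  by exists 0%N.
have [MB|MB] := pselect (M Bs = [set 0]).
  exfalso; apply: nMA; split => //; rewrite -GA.
  by apply: (mm_bigcup hX Mm mG _ tG) => -[|n] //=.
exists Bs; split => //.
- by case.
- by move=> p [].
move=> E mE EB ME; apply: contrapT => NE.
have bE : bad E.
  split => //; first by move=> p /EB [].
  by case.
have FE0 F : Fam F -> F `<=` E0 by move=> FF p Fp; exists (g F) => //; rewrite Sg.
have dE F : Fam F -> F `&` E = set0.
  move=> FF; apply/seteqP; split => // p [Fp Ep].
  by have [_] := EB p Ep; apply; exact: FE0 Fp.
have nFE : ~ Fam E.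
  move=> FE; apply: NE.
  have -> : E = set0 by apply/seteqP; split => // p Ep; rewrite -(dE E FE); split.
  exact: mm_set0.
apply: (Fmax (Fam `|` [set E])).
  split; first by move=> p Fp; left.
  by move=> sub; apply: nFE; apply: sub; right.
split.
  by move=> F [/Fbad //|->].
move=> E1 E2 [F1|->] [F2|->] ne.
- exact: Fdis.
- exact: dE.
- by rewrite setIC; exact: dE.
- by [].
Qed.
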